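(* Let $D$ be a BN distribution on $\{0,1\}^n$ with all conditional probabilities in $(0,1)$ and variable order $1,\dots,n$ a topological order, and let $f:\{0,1\}^n\to\mathbb{R}$ satisfy $\mathbb{E}_D[f(X)^2]\le 1$. Let $\theta>0$, $0\le k\le n$, and let $U$ be distributed as $(X_1,\dots,X_{n-k})$ for $X\sim D$. Then: (1) the number of $S\subseteq[n]$ with $|\hat f_S|\ge\theta$ is at most $1/\theta^2$; (2) for every $\alpha\in\{0,1\}^k$, $\mathbb{E}[g_\alpha(U)^2]=\sum_{\beta\in\{0,1\}^{n-k}}\hat f_{\beta\alpha}^2$; (3) if there is $\beta\in\{0,1\}^{n-k}$ with $|\hat f_{\beta\alpha}|\ge\theta$ then $\mathbb{E}[g_\alpha(U)^2]\ge\theta^2$; (4) the number of $\alpha\in\{0,1\}^k$ with $\mathbb{E}[g_\alpha(U)^2]\ge\theta^2$ is at most $1/\theta^2$.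
   Context: A Bayesian network (BN) on binary variables $X_1,\dots,X_n$ is a directed acyclic graph on $[n]$ with parent sets $\operatorname{pa}(v)$ and conditional distributions with $P(X_1,\dots,X_n)=\prod_v P(X_v\mid X_{\operatorname{pa}(v)})$. Let $\mu_{v,x_{\operatorname{pa}(v)}}=P(X_v=1\mid X_{\operatorname{pa}(v)}=x_{\operatorname{pa}(v)})$, $\sigma_{v,x_{\operatorname{pa}(v)}}=\sqrt{\mu_{v,x_{\operatorname{pa}(v)}}(1-\mu_{v,x_{\operatorname{pa}(v)}})}$, $\phi_v(x)=(x_v-\mu_{v,x_{\operatorname{pa}(v)}})/\sigma_{v,x_{\operatorname{pa}(v)}}$, $\phi_S=\prod_{v\in S}\phi_v$, and $\hat f_S=\mathbb{E}_D[f(X)\phi_S(X)]$. Sets $S\subseteq[n]$ are identified with strings $\gamma\in\{0,1\}^n$ via $\gamma_i=1\iff i\in S$. For $\beta\in\{0,1\}^{n-k}$, $\alpha\in\{0,1\}^k$, $\beta\alpha$ is their concatenation ($\beta$ in coordinates $1,\dots,n-k$), $0^m$ the zero string of length $m$, and $g_\alpha(u)=\sum_{\beta\in\{0,1\}^{n-k}}\hat f_{\beta\alpha}\,\phi_{\beta0^k}(u0^k)$ for $u\in\{0,1\}^{n-k}$. *)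

(* Defs.v *)
(* Binary Bayesian networks on variables 'I_n (0-based:
   variable i of the paper is index i-1), assignments x : {ffun 'I_n -> bool}. *)
From mathcomp Require Import all_boot all_order all_algebra.
Set Implicit Arguments. Unset Strict Implicit. Unset Printing Implicit Defensive.
Import Order.TTheory GRing.Theory Num.Theory.
Local Open Scope ring_scope.

Section BN.
Variables (R : rcfType) (n : nat).
(* mu v x = P(X_v = 1 | X_pa(v) = x_pa(v)); locality in pa(v) is a hypothesis
   of the main theorem. *)
Variable mu : 'I_n -> {ffun 'I_n -> bool} -> R.

Definition bn_prob (x : {ffun 'I_n -> bool}) : R :=
  \prod_(v < n) (if x v then mu v x else 1 - mu v x).

Definition bn_exp (h : {ffun 'I_n -> bool} -> R) : R :=
  \sum_(x : {ffun 'I_n -> bool}) bn_prob x * h x.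

Definition bn_sigma (v : 'I_n) (x : {ffun 'I_n -> bool}) : R :=
  Num.sqrt (mu v x * (1 - mu v x)).

Definition bn_phi (v : 'I_n) (x : {ffun 'I_n -> bool}) : R :=
  ((x v)%:R - mu v x) / bn_sigma v x.

Definition bn_phiS (S : {set 'I_n}) (x : {ffun 'I_n -> bool}) : R :=
  \prod_(v in S) bn_phi v x.

Definition fourier (f : {ffun 'I_n -> bool} -> R) (S : {set 'I_n}) : R :=
  bn_exp (fun x => f x * bn_phiS S x).
End BN.

Definition setof (n : nat) (g : {ffun 'I_n -> bool}) : {set 'I_n} := [set i | g i].

(* concatenation beta alpha : beta in coordinates 0..n-k-1, alpha in n-k..n-1 *)
Definition catb (n k : nat) (b : {ffun 'I_(n - k) -> bool}) (a : {ffun 'I_k -> bool})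
  : {ffun 'I_n -> bool} :=
  [ffun i : 'I_n => nth false (codom b ++ codom a) i].
Arguments catb n k b a : clear implicits.

Definition prefb (n k : nat) (x : {ffun 'I_n -> bool}) : {ffun 'I_(n - k) -> bool} :=
  [ffun j : 'I_(n - k) => nth false (codom x) j].
Arguments prefb n k x : clear implicits.

Definition galpha (R : rcfType) (n k : nat) (mu : 'I_n -> {ffun 'I_n -> bool} -> R)
  (f : {ffun 'I_n -> bool} -> R) (a : {ffun 'I_k -> bool}) (u : {ffun 'I_(n - k) -> bool}) : R :=
  \sum_(b : {ffun 'I_(n - k) -> bool})
     fourier mu f (setof (catb n k b a)) *
     bn_phiS mu (setof (catb n k b [ffun=> false])) (catb n k u [ffun=> false]).
Arguments galpha R n k mu f a u : clear implicits.

Definition galpha_sqnorm (R : rcfType) (n k : nat) (mu : 'I_n -> {ffun 'I_n -> bool} -> R)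
  (f : {ffun 'I_n -> bool} -> R) (a : {ffun 'I_k -> bool}) : R :=
  bn_exp mu (fun x => (galpha R n k mu f a (prefb n k x)) ^+ 2).
Arguments galpha_sqnorm R n k mu f a : clear implicits.

(* Main.v *)
Require Import Defs.
From mathcomp Require Import all_boot all_order all_algebra.
From mathcomp Require Import ring lra zify.
Set Implicit Arguments. Unset Strict Implicit. Unset Printing Implicit Defensive.
Import Order.TTheory GRing.Theory Num.Theory.
Local Open Scope ring_scope.

Lemma catb_lo (n k : nat) b a (i : 'I_n) (h : (i < n - k)%N) :
  catb n k b a i = b (Ordinal h).
Proof.
rewrite ffunE nth_cat size_codom card_ord h codom_ffun.
exact: (nth_fgraph_ord false (Ordinal h) b).
Qed.

Lemma catb_hi (n k : nat) b a (i : 'I_n) (h : (i - (n - k) < k)%N) :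
  (n - k <= i)%N -> catb n k b a i = a (Ordinal h).
Proof.
move=> le; rewrite ffunE nth_cat size_codom card_ord ltnNge le /= codom_ffun.
exact: (nth_fgraph_ord false (Ordinal h) a).
Qed.

Lemma hi_bound (n k : nat) (i : 'I_n) : (k <= n)%N -> (n - k <= i)%N -> (i - (n - k) < k)%N.
Proof. move=> kn le; have := ltn_ord i; move: (nat_of_ord i) le => ii; lia. Qed.

Lemma prefbE (n k : nat) x (j : 'I_(n - k)) (h : (j < n)%N) :
  prefb n k x j = x (Ordinal h).
Proof.
rewrite ffunE codom_ffun; exact: (nth_fgraph_ord false (Ordinal h) x).
Qed.

Lemma setof_inj (n : nat) : injective (@setof n).
Proof.
move=> g g' E; apply/ffunP => i.
have := congr1 (fun A : {set 'I_n} => i \in A) E; by rewrite /setof /= !inE.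
Qed.

Lemma catb_inj (n k : nat) b a b' a' : (k <= n)%N ->
  catb n k b a = catb n k b' a' -> b = b' /\ a = a'.
Proof.
move=> kn E; split; apply/ffunP => j.
  have hj : (j < n)%N by have := ltn_ord j; move: (nat_of_ord j) => jj; lia.
  have := congr1 (fun g : {ffun 'I_n -> bool} => g (Ordinal hj)) E.
  have h' : (Ordinal hj < n - k)%N by exact: (ltn_ord j).
  rewrite !(catb_lo _ _ h').
  by have -> : Ordinal h' = j by apply: val_inj.
have hj : (n - k + j < n)%N by have := ltn_ord j; move: (nat_of_ord j) => jj; lia.
have := congr1 (fun g : {ffun 'I_n -> bool} => g (Ordinal hj)) E.
have le : (n - k <= Ordinal hj)%N by rewrite /= leq_addr.
have h' := hi_bound kn le.
rewrite !(catb_hi _ _ h') //.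
by have -> : Ordinal h' = j by apply: val_inj => /=; rewrite addKn.
Qed.

Section Lin.
Variables (R : rcfType) (n : nat) (mu : 'I_n -> {ffun 'I_n -> bool} -> R).

Lemma bn_expD h1 h2 : bn_exp mu (fun x => h1 x + h2 x) = bn_exp mu h1 + bn_exp mu h2.
Proof. by rewrite /bn_exp -big_split; apply: eq_bigr => x _; rewrite mulrDr. Qed.

Lemma bn_expB h1 h2 : bn_exp mu (fun x => h1 x - h2 x) = bn_exp mu h1 - bn_exp mu h2.
Proof. rewrite /bn_exp -sumrB; apply: eq_bigr => x _; by rewrite mulrBr. Qed.

Lemma bn_expZ c h : bn_exp mu (fun x => c * h x) = c * bn_exp mu h.
Proof. rewrite /bn_exp mulr_sumr; apply: eq_bigr => x _; by rewrite mulrCA. Qed.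

Lemma bn_exp_sum (I : finType) (F : I -> {ffun 'I_n -> bool} -> R) :
  bn_exp mu (fun x => \sum_i F i x) = \sum_i bn_exp mu (F i).
Proof.
rewrite /bn_exp exchange_big; apply: eq_bigr => x _; by rewrite mulr_sumr.
Qed.

Lemma bn_exp_ext h1 h2 : (forall x, h1 x = h2 x) -> bn_exp mu h1 = bn_exp mu h2.
Proof. by move=> e; apply: eq_bigr => x _; rewrite e. Qed.

End Lin.

Section Main.
Variables (R : rcfType) (n : nat) (pa : 'I_n -> {set 'I_n}) (mu : 'I_n -> {ffun 'I_n -> bool} -> R).
Hypothesis topo : forall v u : 'I_n, u \in pa v -> (u < v)%N.
Hypothesis loc : forall (v : 'I_n) (x y : {ffun 'I_n -> bool}),
      (forall u, u \in pa v -> x u = y u) -> mu v x = mu v y.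
Hypothesis mu01 : forall v x, 0 < mu v x < 1.

Definition mut (m : nat) (v : 'I_n) (x : {ffun 'I_n -> bool}) : R := if (v < m)%N then mu v x else 2^-1.
Definition flip (m : 'I_n) (x : {ffun 'I_n -> bool}) : {ffun 'I_n -> bool} :=
  [ffun i => if i == m then ~~ x i else x i].
Definition pf (v : 'I_n) (x : {ffun 'I_n -> bool}) : R := if x v then mu v x else 1 - mu v x.
Definition fac (m : nat) (v : 'I_n) (x : {ffun 'I_n -> bool}) : R :=
  if x v then mut m v x else 1 - mut m v x.

Lemma flipK m : involutive (flip m).
Proof.
move=> x; apply/ffunP => i; rewrite !ffunE; case: eqP => [->|//].
by rewrite negbK.
Qed.

Lemma flip_inj m : injective (flip m).
Proof. exact: inv_inj (flipK m). Qed.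

Lemma flip_ne (m : 'I_n) (x : {ffun 'I_n -> bool}) (i : 'I_n) : i != m -> flip m x i = x i.
Proof. by rewrite ffunE => /negbTE ->. Qed.

Lemma flip_eq (m : 'I_n) (x : {ffun 'I_n -> bool}) : flip m x m = ~~ x m.
Proof. by rewrite ffunE eqxx. Qed.

Lemma mu_agree (v : 'I_n) (x y : {ffun 'I_n -> bool}) : (forall u : 'I_n, (u < v)%N -> x u = y u) -> mu v x = mu v y.
Proof. by move=> H; apply: loc => u /topo; apply: H. Qed.

Lemma mu_flip (m v : 'I_n) (x : {ffun 'I_n -> bool}) : (v <= m)%N -> mu v (flip m x) = mu v x.
Proof.
move=> le; apply: mu_agree => u lt; apply: flip_ne.
by apply/eqP => E; move: lt; rewrite E ltnNge le.
Qed.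

Lemma pf_flip_sum (m : 'I_n) (x : {ffun 'I_n -> bool}) : pf m x + pf m (flip m x) = 1.
Proof. rewrite /pf flip_eq mu_flip //; case: (x m) => /=; [by rewrite addrC subrK | by rewrite subrK]. Qed.

Lemma fac_flip (mo : 'I_n) (m : nat) (v : 'I_n) (x : {ffun 'I_n -> bool}) : (m <= mo)%N -> v != mo -> fac m v (flip mo x) = fac m v x.
Proof.
move=> le ne; rewrite /fac /mut flip_ne //.
case: (ltnP v m) => lt //; rewrite mu_flip //.
by apply: ltnW; apply: leq_trans le.
Qed.

Lemma step (mo : 'I_n) h :
  bn_exp (mut (mo.+1)) h =
  bn_exp (mut mo) (fun x => pf mo x * h x + pf mo (flip mo x) * h (flip mo x)).
Proof.
set A := fun x => \prod_(v | v != mo) fac mo v x.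
have eA : forall x, A (flip mo x) = A x.
  by move=> x; apply: eq_bigr => v ne; rewrite fac_flip.
have P1 : forall x, bn_prob (mut mo.+1) x = pf mo x * A x.
  move=> x; rewrite /bn_prob (bigD1 mo) //=; congr (_ * _).
    by rewrite /pf /mut ltnSn.
  apply: eq_bigr => v ne; rewrite /fac /mut ltnS leq_eqVlt.
  have -> : (nat_of_ord v == nat_of_ord mo) = false by apply/negbTE.
  by [].
have P0 : forall x, bn_prob (mut mo) x = 2^-1 * A x.
  move=> x; rewrite /bn_prob (bigD1 mo) //=; congr (_ * _).
  rewrite /mut ltnn; case: (x mo) => //.
  have h2 : (2:R) != 0 by rewrite pnatr_eq0.
  by apply: (mulfI h2); rewrite mulrBr mulfV // mulr1; ring.
rewrite /bn_exp.
under eq_bigr => x _ do rewrite P1.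
under [RHS]eq_bigr => x _ do rewrite P0 mulrDr.
rewrite big_split /=.
have E : \sum_x 2^-1 * A x * (pf mo (flip mo x) * h (flip mo x)) =
         \sum_x 2^-1 * A x * (pf mo x * h x).
  rewrite [RHS](reindex_inj (@flip_inj mo)) /=.
  by apply: eq_bigr => x _; rewrite eA.
rewrite E -big_split /=; apply: eq_bigr => x _.
have h2 : (2:R) != 0 by rewrite pnatr_eq0.
have -> : 2^-1 * A x * (pf mo x * h x) + 2^-1 * A x * (pf mo x * h x)
   = (2 * 2^-1) * (pf mo x * A x * h x) by ring.
by rewrite mulfV // mul1r.
Qed.

Lemma marg (mo : 'I_n) h : (forall x, h (flip mo x) = h x) ->
  bn_exp (mut (mo.+1)) h = bn_exp (mut mo) h.
Proof.
move=> hf; rewrite step; apply: bn_exp_ext => x.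
by rewrite hf -mulrDl pf_flip_sum mul1r.
Qed.

Lemma bn_exp0 m : bn_exp (mut m) (fun _ => 0) = 0.
Proof. by rewrite /bn_exp big1 // => x _; rewrite mulr0. Qed.

Lemma base1 : bn_exp (mut 0) (fun _ => 1) = 1.
Proof.
have P : forall x, bn_prob (mut 0) x = 2^-1 ^+ n.
  move=> x; rewrite /bn_prob /mut.
  have -> : \prod_(v < n) (if x v then 2^-1 else 1 - 2^-1 : R) = \prod_(v < n) (2^-1 : R).
    apply: eq_bigr => v _; case: (x v) => //.
    have h2 : (2:R) != 0 by rewrite pnatr_eq0.
    by apply: (mulfI h2); rewrite mulrBr mulfV // mulr1; ring.
  by rewrite prodr_const card_ord.
rewrite /bn_exp.
under eq_bigr => x _ do rewrite P mulr1.
rewrite sumr_const card_ffun card_bool card_ord.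
have e2 : ((2 ^ n)%N%:R : R) = 2 ^+ n by rewrite natrX.
rewrite -(mulr_natr (2^-1 ^+ n : R)) e2 -exprMn mulVf ?expr1n // pnatr_eq0 //.
Qed.

Lemma mut_n h : bn_exp (mut n) h = bn_exp mu h.
Proof.
apply: eq_bigr => x _; congr (_ * _); apply: eq_bigr => v _.
by rewrite /mut ltn_ord.
Qed.

Lemma phi_agree (v : 'I_n) (x y : {ffun 'I_n -> bool}) :
  (forall u : 'I_n, (u <= v)%N -> x u = y u) -> bn_phi mu v x = bn_phi mu v y.
Proof.
move=> H; rewrite /bn_phi /bn_sigma (@mu_agree v x y) ?H //.
by move=> u /ltnW; apply: H.
Qed.

Lemma phiS_agree (S : {set 'I_n}) (x y : {ffun 'I_n -> bool}) :
  (forall v, v \in S -> forall u : 'I_n, (u <= v)%N -> x u = y u) ->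
  bn_phiS mu S x = bn_phiS mu S y.
Proof. by move=> H; apply: eq_bigr => v vS; apply: phi_agree; apply: H. Qed.

Lemma sig_facts (v : 'I_n) x :
  bn_sigma mu v x != 0 /\ bn_sigma mu v x ^+ 2 = mu v x * (1 - mu v x).
Proof.
have /andP [h0 h1] := mu01 v x.
have p : 0 < mu v x * (1 - mu v x) by rewrite mulr_gt0 // subr_gt0.
split; last by rewrite /bn_sigma sqr_sqrtr // ltW.
by rewrite /bn_sigma gt_eqF // sqrtr_gt0.
Qed.

Lemma id1 (m : 'I_n) x :
  pf m x * bn_phi mu m x + pf m (flip m x) * bn_phi mu m (flip m x) = 0.
Proof.
rewrite /pf /bn_phi /bn_sigma flip_eq !mu_flip //.
by case: (x m) => /=; ring.
Qed.

Lemma id2 (m : 'I_n) x :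
  pf m x * bn_phi mu m x ^+ 2 + pf m (flip m x) * bn_phi mu m (flip m x) ^+ 2 = 1.
Proof.
have [s0 s2] := sig_facts m x.
have /andP [h0 h1] := mu01 m x.
have a0 : mu m x != 0 by rewrite gt_eqF.
have a1 : 1 - mu m x != 0 by rewrite gt_eqF // subr_gt0.
rewrite /pf /bn_phi flip_eq /bn_sigma !mu_flip //.
move: s0 s2; rewrite /bn_sigma; set s := Num.sqrt _ => s0 s2.
rewrite !expr_div_n s2.
by case: (x m) => /=; field; rewrite a0 a1.
Qed.

Lemma phiS_D1 (mo : 'I_n) (S : {set 'I_n}) x : mo \in S ->
  bn_phiS mu S x = bn_phi mu mo x * bn_phiS mu (S :\ mo) x.
Proof. by move=> mS; rewrite /bn_phiS (big_setD1 mo). Qed.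
Arguments phiS_D1 {mo S} x _.

Lemma phiS_flip (mo : 'I_n) (S : {set 'I_n}) x :
  (forall v, v \in S -> (v < mo)%N) -> bn_phiS mu S (flip mo x) = bn_phiS mu S x.
Proof.
move=> H; apply: phiS_agree => v vS u le; apply: flip_ne.
apply/eqP => E; have := H v vS; rewrite -E ltnNge le //.
Qed.
Arguments phiS_flip mo S {x} _.

Lemma ortho_mut m : (m <= n)%N -> forall S T : {set 'I_n},
  (forall v, v \in S :|: T -> (v < m)%N) ->
  bn_exp (mut m) (fun x => bn_phiS mu S x * bn_phiS mu T x) = (S == T)%:R.
Proof.
elim: m => [_ S T H | m IH lt S T H].
  have E0 : forall U : {set 'I_n}, U \subset S :|: T -> U = set0.
    move=> U sub; apply/setP => v; rewrite in_set0; apply/negbTE/negP => vU.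
    by have := H v (subsetP sub v vU).
  rewrite (E0 S) ?subsetUl // (E0 T) ?subsetUr // eqxx.
  rewrite -base1; apply: bn_exp_ext => x.
  by rewrite /bn_phiS big_set0 mulr1.
have ltm : (m < n)%N by [].
pose mo := Ordinal ltm.
have em : nat_of_ord mo = m by [].
have lt' : (m <= n)%N by apply: ltnW.
have Hs : forall v, v \in S :|: T -> v != mo -> (v < m)%N.
  move=> v vST ne; have := H v vST; rewrite ltnS leq_eqVlt => /orP [/eqP E|//].
  by move: ne; rewrite -(inj_eq val_inj) /= E eqxx.
have HS : forall v, v \in S -> v != mo -> (v < m)%N.
  by move=> v vS; apply: Hs; rewrite inE vS.
have HT : forall v, v \in T -> v != mo -> (v < m)%N.
  by move=> v vT; apply: Hs; rewrite inE vT orbT.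
have HSD : forall v, v \in S :\ mo -> (v < m)%N.
  by move=> v; rewrite !inE => /andP [ne vS]; apply: HS.
have HTD : forall v, v \in T :\ mo -> (v < m)%N.
  by move=> v; rewrite !inE => /andP [ne vT]; apply: HT.
rewrite -em step em.
case mS: (mo \in S); case mT: (mo \in T).
- transitivity (bn_exp (mut m) (fun x => bn_phiS mu (S :\ mo) x * bn_phiS mu (T :\ mo) x)).
    apply: bn_exp_ext => x.
    rewrite !(phiS_D1 _ mS) !(phiS_D1 _ mT) !(phiS_flip mo (S :\ mo)) ?em //.
    rewrite !(phiS_flip mo (T :\ mo)) ?em //.
    rewrite -[RHS]mulr1 -(id2 mo x); ring.
  rewrite IH //; last by move=> v; rewrite inE => /orP [] ?; [apply: HSD | apply: HTD].
  have -> : (S :\ mo == T :\ mo) = (S == T) => //.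
  case: (S =P T) => [->|ne]; first by rewrite !eqxx.
  apply/negbTE/eqP => E; apply: ne.
  by rewrite -(setD1K mS) -(setD1K mT) E.
- transitivity (bn_exp (mut m) (fun _ => 0)); last first.
    rewrite bn_exp0; case: eqP => // E; by move: mS; rewrite E mT.
  apply: bn_exp_ext => x.
  rewrite !(phiS_D1 _ mS) !(phiS_flip mo (S :\ mo)) ?em //.
  rewrite !(phiS_flip mo T) ?em //; last first.
    by move=> v vT; apply: HT => //; apply/eqP => E; move: mT; rewrite -E vT.
  rewrite -[RHS](mulr0 (bn_phiS mu (S :\ mo) x * bn_phiS mu T x)) -(id1 mo x); ring.
- transitivity (bn_exp (mut m) (fun _ => 0)); last first.
    rewrite bn_exp0; case: eqP => // E; by move: mS; rewrite E mT.
  apply: bn_exp_ext => x.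
  rewrite !(phiS_D1 _ mT) !(phiS_flip mo (T :\ mo)) ?em //.
  rewrite !(phiS_flip mo S) ?em //; last first.
    by move=> v vS; apply: HS => //; apply/eqP => E; move: mS; rewrite -E vS.
  rewrite -[RHS](mulr0 (bn_phiS mu (T :\ mo) x * bn_phiS mu S x)) -(id1 mo x); ring.
- rewrite -IH //.
  apply: bn_exp_ext => x.
  rewrite !(phiS_flip mo S) ?(phiS_flip mo T) ?em.
  + by rewrite -mulrDl pf_flip_sum mul1r.
  + by move=> v vT; apply: HT => //; apply/eqP => E; move: mT; rewrite -E vT.
  + by move=> v vS; apply: HS => //; apply/eqP => E; move: mS; rewrite -E vS.
  move=> v vST; apply: Hs => //; apply/eqP => E; move: vST; rewrite E inE mS mT.
  done.
Qed.

Lemma ortho S T : bn_exp mu (fun x => bn_phiS mu S x * bn_phiS mu T x) = (S == T)%:R.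
Proof. by rewrite -mut_n ortho_mut // => v _; apply: ltn_ord. Qed.

Lemma bn_prob_ge0 x : 0 <= bn_prob mu x.
Proof.
apply: prodr_ge0 => v _; have /andP [h0 h1] := mu01 v x.
by case: (x v); [apply: ltW | rewrite subr_ge0 ltW].
Qed.

Lemma bn_exp_ge0 h : (forall x, 0 <= h x) -> 0 <= bn_exp mu h.
Proof. by move=> H; apply: sumr_ge0 => x _; rewrite mulr_ge0 ?bn_prob_ge0. Qed.

Lemma sqnorm (I : finType) (t : I -> {set 'I_n}) (c : I -> R) : injective t ->
  bn_exp mu (fun x => (\sum_i c i * bn_phiS mu (t i) x) ^+ 2) = \sum_i c i ^+ 2.
Proof.
move=> ti.
transitivity (bn_exp mu (fun x => \sum_i \sum_j
   (c i * c j) * (bn_phiS mu (t i) x * bn_phiS mu (t j) x))).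
  apply: bn_exp_ext => x; rewrite expr2 big_distrl /=; apply: eq_bigr => i _.
  rewrite big_distrr /=; apply: eq_bigr => j _; ring.
rewrite bn_exp_sum; apply: eq_bigr => i _.
rewrite bn_exp_sum (bigD1 i) //= big1 ?addr0.
  by rewrite bn_expZ ortho // eqxx mulr1 expr2.
move=> j ne; rewrite bn_expZ ortho // (inj_eq ti).
by rewrite eq_sym (negbTE ne) mulr0.
Qed.

Lemma bessel (f : {ffun 'I_n -> bool} -> R) :
  \sum_S fourier mu f S ^+ 2 <= bn_exp mu (fun x => f x ^+ 2).
Proof.
set c := fun S => fourier mu f S.
set g := fun x => \sum_S c S * bn_phiS mu (id S) x.
have Hg : bn_exp mu (fun x => g x ^+ 2) = \sum_S c S ^+ 2 by apply: sqnorm.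
have Hfg : bn_exp mu (fun x => f x * g x) = \sum_S c S ^+ 2.
  rewrite /g; under bn_exp_ext => x do rewrite big_distrr /=.
  rewrite bn_exp_sum; apply: eq_bigr => S _.
  under bn_exp_ext => x do rewrite mulrCA.
  by rewrite bn_expZ expr2.
have : 0 <= bn_exp mu (fun x => (f x - g x) ^+ 2) by apply: bn_exp_ge0 => x; apply: sqr_ge0.
have -> : bn_exp mu (fun x => (f x - g x) ^+ 2) =
   bn_exp mu (fun x => (f x ^+ 2 - 2 * (f x * g x)) + g x ^+ 2).
  by apply: bn_exp_ext => x; ring.
rewrite bn_expD bn_expB bn_expZ Hg Hfg.
set E := bn_exp mu _; set Q := \sum_S _.
have -> : E - 2 * Q + Q = E - Q by ring.
by rewrite subr_ge0.
Qed.

Lemma sub_sum_le (I : finType) (A : pred I) (F : I -> R) :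
  (forall i, 0 <= F i) -> \sum_(i in A) F i <= \sum_i F i.
Proof.
move=> H; rewrite [X in _ <= X](bigID A) /= lerDl; exact: sumr_ge0.
Qed.
End Main.

Lemma sq_le (R : rcfType) (t y : R) : 0 < t -> t <= `|y| -> t ^+ 2 <= y ^+ 2.
Proof.
move=> t0 le; rewrite -[y ^+ 2]ger0_norm ?sqr_ge0 // normrX !expr2.
by apply: ler_pM => //; apply: ltW.
Qed.

Theorem mainTheorem3 (R : rcfType) (n : nat)
  (pa : 'I_n -> {set 'I_n}) (mu : 'I_n -> {ffun 'I_n -> bool} -> R)
  (f : {ffun 'I_n -> bool} -> R) (theta : R) (k : nat) :
  (* 1, ..., n is a topological order of the DAG *)
  (forall v u : 'I_n, u \in pa v -> (u < v)%N) ->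
  (* mu v x depends only on x restricted to pa(v) *)
  (forall (v : 'I_n) (x y : {ffun 'I_n -> bool}),
      (forall u, u \in pa v -> x u = y u) -> mu v x = mu v y) ->
  (* all conditional probabilities in (0,1) *)
  (forall v x, 0 < mu v x < 1) ->
  bn_exp mu (fun x => f x ^+ 2) <= 1 ->
  0 < theta ->
  (k <= n)%N ->
  [/\ (#|[set S : {set 'I_n} | theta <= `|fourier mu f S|]|%:R <= 1 / theta ^+ 2),
      (forall a : {ffun 'I_k -> bool},
          galpha_sqnorm R n k mu f a =
          \sum_(b : {ffun 'I_(n - k) -> bool}) fourier mu f (setof (catb n k b a)) ^+ 2),
      (forall a : {ffun 'I_k -> bool},
          (exists b : {ffun 'I_(n - k) -> bool},
              theta <= `|fourier mu f (setof (catb n k b a))|) ->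
          theta ^+ 2 <= galpha_sqnorm R n k mu f a)
    & (#|[set a : {ffun 'I_k -> bool} | theta ^+ 2 <= galpha_sqnorm R n k mu f a]|%:R
         <= 1 / theta ^+ 2)].

Proof.
move=> topo loc mu01 hf th kn.
have SB : \sum_S fourier mu f S ^+ 2 <= 1 := le_trans (bessel topo loc mu01 f) hf.
have th2 : 0 < theta ^+ 2 by apply: exprn_gt0.
have G2 : forall a : {ffun 'I_k -> bool}, galpha_sqnorm R n k mu f a =
   \sum_(b : {ffun 'I_(n - k) -> bool}) fourier mu f (setof (catb n k b a)) ^+ 2.
  move=> a; rewrite /galpha_sqnorm.
  transitivity (bn_exp mu (fun x => (\sum_(b : {ffun 'I_(n - k) -> bool})
     fourier mu f (setof (catb n k b a)) *
     bn_phiS mu (setof (catb n k b [ffun=> false])) x) ^+ 2)).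
    apply: bn_exp_ext => x; congr (_ ^+ 2); apply: eq_bigr => b _; congr (_ * _).
    apply: (phiS_agree topo loc) => v; rewrite inE => vin u le.
    have vlt : (v < n - k)%N.
      case: (ltnP v (n - k)) => // hle; move: vin.
      by rewrite (catb_hi _ _ (hi_bound kn hle)) // ffunE.
    have ult : (u < n - k)%N by apply: leq_ltn_trans le vlt.
    rewrite (catb_lo _ _ ult) (@prefbE n k x (Ordinal ult) (ltn_ord u)).
    by congr (x _); apply: val_inj.
  apply: (sqnorm topo loc mu01) => b b' /setof_inj /(catb_inj kn) [].
  done.
have G0 : forall a, 0 <= galpha_sqnorm R n k mu f a.
  by move=> a; rewrite G2; apply: sumr_ge0 => b _; apply: sqr_ge0.
split.
- rewrite ler_pdivlMr // mulr_natl -sumr_const.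
  apply: le_trans SB.
  apply: le_trans (sub_sum_le _ _); last by move=> S; apply: sqr_ge0.
  apply: ler_sum => S; rewrite inE => hS; exact: sq_le.
- exact: G2.
- move=> a [b hb]; rewrite G2 (bigD1 b) //=.
  apply: le_trans (sq_le th hb) _.
  by rewrite lerDl; apply: sumr_ge0 => b' _; apply: sqr_ge0.
- rewrite ler_pdivlMr // mulr_natl -sumr_const.
  apply: le_trans SB.
  apply: le_trans (_ : \sum_(a in [set a | theta ^+ 2 <= galpha_sqnorm R n k mu f a])
      galpha_sqnorm R n k mu f a <= _).
    by apply: ler_sum => a; rewrite inE.
  apply: le_trans (sub_sum_le _ _) _ => //.
  under eq_bigr => a _ do rewrite G2.
  rewrite pair_bigA /=.
  rewrite (eq_bigl (fun p => p \in [set: {ffun 'I_k -> bool} * {ffun 'I_(n - k) -> bool}]));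
    last by move=> p; rewrite inE.
  set h := fun p : {ffun 'I_k -> bool} * {ffun 'I_(n - k) -> bool} =>
     setof (catb n k p.2 p.1).
  rewrite -(big_imset (fun S => fourier mu f S ^+ 2) (h := h)).
    apply: sub_sum_le => S; exact: sqr_ge0.
  move=> [a b] [a' b'] _ _; rewrite /h /= => /setof_inj /(catb_inj kn) [-> ->].
  done.
Qed.
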